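(* Let $n\ge 1$ and let $\mathbf x=(x_1,\dots,x_n)\in[0,1]^n$ be any profile. Let $n_1=|\{i: x_i\in[0,\tfrac12]\}|$ and $n_2=|\{i: x_i\in(\tfrac12,1]\}|$. The Majority Vote mechanism outputs $y=0$ if $n_1\le n_2$ and $y=1$ otherwise. Then for every finite $p>0$, $$\max_{z\in[0,1]}\Big(\sum_{i=1}^n |x_i-z|^p\Big)^{1/p}\le (2^p+1)^{1/p}\Big(\sum_{i=1}^n |x_i-y|^p\Big)^{1/p},$$ and $$\max_{z\in[0,1]}\max_{i}|x_i-z|\le 2\max_i |x_i-y|.$$ That is, Majority Vote is a $(2^p+1)^{1/p}$-approximation for the $L_p$ social utility for every finite $p>0$ and a $2$-approximation for the $L_\infty$ social utility (maximum utility).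
   Context: Obnoxious facility location on $[0,1]$: $n$ agents report locations $x_i\in[0,1]$; a facility is placed at $y\in[0,1]$; agent $i$'s utility is $u(x_i,y)=|x_i-y|$. The $L_p$ social utility of $y$ is $\mathrm{su}_p(y,\mathbf x)=(\sum_i u(x_i,y)^p)^{1/p}$, and for $p=+\infty$ it is $\max_i u(x_i,y)$. A deterministic mechanism $f$ is an $\alpha$-approximation if $\max_{z\in[0,1]}\mathrm{su}_p(z,\mathbf x)\le \alpha\,\mathrm{su}_p(f(\mathbf x),\mathbf x)$ for all profiles $\mathbf x$. *)

(* Defs.v *)
From mathcomp Require Import all_boot all_order all_algebra.
From mathcomp Require Import all_classical all_reals all_analysis.
Set Implicit Arguments. Unset Strict Implicit. Unset Printing Implicit Defensive.
Import Order.TTheory GRing.Theory Num.Theory.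
Local Open Scope ring_scope.

Definition util (R : realType) (a y : R) : R := `|a - y|.

Definition su_p (R : realType) (n : nat) (p : R) (y : R) (x : 'I_n -> R) : R :=
  (\sum_(i < n) util (x i) y `^ p) `^ p^-1.

(* L_infinity social utility: max_i u(x_i, y) (all terms are >= 0) *)
Definition su_inf (R : realType) (n : nat) (y : R) (x : 'I_n -> R) : R :=
  \big[Num.max/0]_(i < n) util (x i) y.

Definition n1 (R : realType) (n : nat) (x : 'I_n -> R) : nat :=
  #|[set i : 'I_n | (0 <= x i) && (x i <= 1/2)]|.
Definition n2 (R : realType) (n : nat) (x : 'I_n -> R) : nat :=
  #|[set i : 'I_n | (1/2 < x i) && (x i <= 1)]|.
Definition majority_vote (R : realType) (n : nat) (x : 'I_n -> R) : R :=
  if (n1 x <= n2 x)%N then 0 else 1.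

(* Main.v *)
Require Import Defs.
From mathcomp Require Import all_boot all_order all_algebra.
From mathcomp Require Import all_classical all_reals all_analysis.
From mathcomp Require Import lra.
Import Order.TTheory GRing.Theory Num.Theory.
Local Open Scope ring_scope.

Section S.
Variables (R : realType) (n : nat) (x : 'I_n -> R).
Hypothesis hx : forall i, 0 <= x i <= 1.

Let y := majority_vote x.
Let far i := (1/2 <= `|x i - y|).

Lemma y01 : y = 0 \/ y = 1.
Proof. rewrite /y /majority_vote; case: ifP; auto. Qed.

Lemma far_le i (z : R) : 0 <= z <= 1 -> far i -> `|x i - z| <= `|x i - y|.
Proof.
move=> /andP[z0 z1]; have /andP[x0 x1] := hx i; rewrite /far.
case: y01 => ->; rewrite ?subr0 ?(ger0_norm x0).
  move=> h.
  rewrite ler_norml; apply/andP; split; lra.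
rewrite distrC ger0_norm ?subr_ge0 // => h.
rewrite ler_norml; apply/andP; split; lra.
Qed.

Lemma le1 i (z : R) : 0 <= z <= 1 -> `|x i - z| <= 1.
Proof.
move=> /andP[z0 z1]; have /andP[x0 x1] := hx i.
rewrite ler_norml; apply/andP; split; lra.
Qed.

Lemma count_far : (#|[set i | ~~ far i]| <= #|[set i | far i]|)%N.
Proof.
rewrite /far /y /majority_vote /n1 /n2; case: ifP => h.
  apply: leq_trans (leq_trans h _).
    apply: subset_leq_card; apply/fintype.subsetP => i; rewrite !inE.
    have /andP[x0 x1] := hx i; rewrite ?subr0 ger0_norm // -ltNge => a.
    apply/andP; split; lra.
  apply: subset_leq_card; apply/fintype.subsetP => i; rewrite !inE.
  have /andP[x0 x1] := hx i; rewrite ?subr0 ger0_norm // => /andP[a _]; lra.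
move/negbT: h; rewrite -ltnNge => h.
apply: ltnW; apply: leq_trans (leq_trans h _).
  rewrite ltnS; apply: subset_leq_card; apply/fintype.subsetP => i; rewrite !inE.
  have /andP[x0 x1] := hx i; rewrite distrC ger0_norm ?subr_ge0 // -ltNge => a.
  apply/andP; split; lra.
apply: subset_leq_card; apply/fintype.subsetP => i; rewrite !inE.
have /andP[x0 x1] := hx i; rewrite distrC ger0_norm ?subr_ge0 // => /andP[_ a]; lra.
Qed.

Lemma card1 (P : pred 'I_n) : \sum_(i | P i) (1:R) = (#|[set i | P i]|)%:R.
Proof. by rewrite sumr_const cardsE. Qed.

Lemma sum_bound (p z : R) : 0 < p -> 0 <= z <= 1 ->
  \sum_i `|x i - z| `^ p <= (2 `^ p + 1) * \sum_i `|x i - y| `^ p.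
Proof.
move=> p0 hz.
rewrite (bigID far) /= (bigID far _ (fun i => `|x i - y| `^ p)) /=.
set Sf := \sum_(i | far i) `|x i - y| `^ p.
set Sn := \sum_(i | ~~ far i) `|x i - y| `^ p.
have Sn0 : 0 <= Sn by apply: sumr_ge0 => i _; apply: powR_ge0.
have Sf0 : 0 <= Sf by apply: sumr_ge0 => i _; apply: powR_ge0.
have h1 : \sum_(i | far i) `|x i - z| `^ p <= Sf.
  apply: ler_sum => i fi; apply: (ge0_ler_powR (ltW p0)); rewrite ?nnegrE //.
  exact: far_le.
have h2 : \sum_(i | ~~ far i) `|x i - z| `^ p <= (#|[set i | ~~ far i]|)%:R.
  rewrite -card1; apply: ler_sum => i _.
  have e1 : (1:R) `^ p = 1 by rewrite powR1.
  rewrite -[leRHS]e1; apply: (ge0_ler_powR (ltW p0)); rewrite ?nnegrE //.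
  exact: le1.
have h3 : (#|[set i | ~~ far i]|)%:R <= (#|[set i | far i]|)%:R :> R.
  by rewrite ler_nat count_far.
have h4 : (#|[set i | far i]|)%:R <= 2 `^ p * Sf.
  rewrite -card1 /Sf mulr_sumr; apply: ler_sum => i fi.
  have e1 : (1:R) `^ p = 1 by rewrite powR1.
  rewrite -powRM //; rewrite -[leLHS]e1; apply: (ge0_ler_powR (ltW p0)); rewrite ?nnegrE //.
  move: fi; rewrite /far; lra.
have p2 : 0 <= 2 `^ p by apply: powR_ge0.
have : 2 `^ p * Sn >= 0 by rewrite mulr_ge0.
lra.
Qed.

Lemma exists_far : (1 <= n)%N -> exists j, far j.
Proof.
move=> n1; case: (pickP far) => [j fj|nf]; first by exists j.
have := count_far.
have -> : [set i | far i] = finset.set0 by apply/setP => i; rewrite !inE nf.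
have -> : [set i | ~~ far i] = finset.setT by apply/setP => i; rewrite !inE nf.
by rewrite cards0 cardsT card_ord leqn0 => /eqP n0; rewrite n0 in n1.
Qed.

Lemma inf_le1 (z : R) : 0 <= z <= 1 -> \big[Num.max/0]_i `|x i - z| <= 1.
Proof.
move=> hz; elim/big_ind: _ => //.
- by move=> a b ha hb; rewrite ge_max ha hb.
- by move=> i _; exact: le1.
Qed.

Lemma ge_term j : `|x j - y| <= \big[Num.max/0]_i `|x i - y|.
Proof. by rewrite (bigD1 j) //= le_max lexx. Qed.

Lemma main_p (p z : R) : 0 < p -> 0 <= z <= 1 ->
  su_p p z x <= (2 `^ p + 1) `^ p^-1 * su_p p y x.
Proof.
move=> p0 hz; rewrite /su_p /util -powRM ?powR_ge0 //; last first.
  by apply: sumr_ge0 => i _; apply: powR_ge0.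
have pi : 0 <= p^-1 by rewrite invr_ge0 ltW.
have H := ge0_ler_powR pi; apply: H; rewrite ?nnegrE.
- by apply: sumr_ge0 => i _; apply: powR_ge0.
- by apply: mulr_ge0; [apply: addr_ge0; [apply: powR_ge0|] | apply: sumr_ge0 => i _; apply: powR_ge0].
- exact: sum_bound.
Qed.

Lemma main_inf (z : R) : (1 <= n)%N -> 0 <= z <= 1 ->
  su_inf z x <= 2 * su_inf y x.
Proof.
move=> n1 hz; have [j fj] := exists_far n1.
have := ge_term j; have := @inf_le1 z hz; rewrite /su_inf /util.
move: fj; rewrite /far; lra.
Qed.

End S.

Theorem theorem1 (R : realType) (n : nat) (x : 'I_n -> R) :
  (1 <= n)%N ->
  (forall i, 0 <= x i <= 1) ->
  (forall p : R, 0 < p ->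
     forall z : R, 0 <= z <= 1 ->
       su_p p z x <= (2 `^ p + 1) `^ p^-1 * su_p p (majority_vote x) x) /\
  (forall z : R, 0 <= z <= 1 ->
       su_inf z x <= 2 * su_inf (majority_vote x) x).
Proof.
move=> n1 hx; split.
- by move=> p p0 z hz; apply: main_p.
- by move=> z hz; apply: main_inf.
Qed.
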